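(* Let $k \ge 1$ and $\epsilon > 0$. There does not exist a single-round asymmetric communication protocol with which, given any probability distribution $P$ with entropy $H$ over a set of $n$ possible messages, the server sends $O(n^{1/k - \epsilon})$ bits in the worst case and the client sends at most $kH + o(\log n)$ bits in the expected case (expectation over the client's message drawn from $P$).
   Context: Asymmetric communication problem: a server knows a probability distribution $P$ over a set of $n$ possible messages; a single client holds one message drawn according to $P$ and does not know $P$. The server must learn the client's message. A single-round protocol is one in which the server sends one transmission (which may depend on $P$) to the client, and the client then sends one transmission (depending on the server's transmission and its own message) from which the server must be able to recover the client's message. The entropy is $H = -\sum_x P(x)\log_2 P(x)$. Asymptotic notation $O(\cdot)$, $o(\cdot)$ is with respect to $n \to \infty$, with $k$ and $\epsilon$ fixed. *)

(* Defs.v *)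
From Stdlib Require Import Reals List.
Open Scope R_scope.

Fixpoint sumn_R (n : nat) (f : nat -> R) : R :=
  match n with
  | O => 0
  | S m => sumn_R m f + f m
  end.

Definition is_distr (n : nat) (P : nat -> R) : Prop :=
  (forall x, (x < n)%nat -> 0 <= P x) /\
  sumn_R n P = 1.

Definition log2 (x : R) : R := ln x / ln 2.

(* Shannon entropy in bits, with the convention 0 log 0 = 0. *)
Definition entropy (n : nat) (P : nat -> R) : R :=
  - sumn_R n (fun x => if Req_EM_T (P x) 0 then 0 else P x * log2 (P x)).

(* A single-round protocol, for each number n of messages:
   - server n P   : the server's transmission (bit string), depending on P;
   - client n s x : the client's transmission given the server's transmission s
                    and its own message x;
   - decode n P t : the server's reconstruction of x from P (which determines
                    its own transmission) and the client's transmission t. *)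
Record protocol : Type := {
  server : nat -> (nat -> R) -> list bool;
  client : nat -> list bool -> nat -> list bool;
  decode : nat -> (nat -> R) -> list bool -> nat
}.

Definition correct (p : protocol) : Prop :=
  forall n P, is_distr n P -> forall x, (x < n)%nat -> 0 < P x ->
    decode p n P (client p n (server p n P) x) = x.

Definition client_expected_bits (p : protocol) (n : nat) (P : nat -> R) : R :=
  sumn_R n (fun x => P x * INR (length (client p n (server p n P) x))).

Definition little_o_log (g : nat -> R) : Prop :=
  forall d, 0 < d -> exists N, forall n, (N <= n)%nat -> Rabs (g n) <= d * ln (INR n).

(* Main.v *)
Require Import Defs.
From Stdlib Require Import Reals List.
Open Scope R_scope.
From Stdlib Require Import Lia Lra ZArith FunctionalExtensionality.

Fixpoint sumA (n : nat) (A : nat -> bool) (h : nat -> nat) : nat :=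
  match n with
  | O => O
  | S m => (sumA m A h + (if A m then h m else O))%nat
  end.
Definition countA (n : nat) (A : nat -> bool) : nat := sumA n A (fun _ => 1%nat).

Module MC.
From mathcomp Require Import all_boot all_order all_algebra zify.
Import Order.TTheory GRing.Theory Num.Theory.
Local Open Scope ring_scope.

Lemma sumA_big n A h : sumA n A h = (\sum_(i < n | A i) h i)%N.
Proof.
elim: n => [|n IH]; first by rewrite big_ord0.
by rewrite /= [RHS]big_mkcond big_ord_recr /= -big_mkcond IH.
Qed.

Definition code (l : seq bool) : nat := foldr (fun (b : bool) (c : nat) => (c.*2 + nat_of_bool b)%N) 1%N l.

Lemma code_gt0 l : (0 < code l)%N.
Proof. by elim: l => //= b l IH; rewrite addn_gt0 double_gt0 IH. Qed.

Lemma code_inj : injective code.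
Proof.
elim=> [|b l IH] [|b' l'] //=.
- by move=> H; have := code_gt0 l'; move: H; rewrite -muln2; lia.
- by move=> H; have := code_gt0 l; move: H; rewrite -muln2; lia.
move=> H.
have Hb : b = b'.
  have := congr1 odd H; rewrite !oddD !odd_double /=; clear; by case: b; case: b'.
subst b'; congr (_ :: _); apply: IH.
by move: H => /eqP; rewrite eqn_add2r => /eqP /(congr1 half); rewrite !doubleK.
Qed.

Lemma code_lt l : (code l < 2 ^ (size l).+1)%N.
Proof.
elim: l => [|b l IH] //=.
rewrite expnS; case: b => /=; rewrite -muln2; lia.
Qed.

Lemma card_code_bound (T : finType) (A : {pred T}) (g : T -> nat) m :
  {in A &, injective g} -> (forall x, x \in A -> (g x < m)%N) -> (#|A| <= m)%N.
Proof.
move=> ginj gb.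
rewrite cardE -(size_map g) -(size_iota 0 m).
apply: uniq_leq_size.
  rewrite map_inj_in_uniq ?enum_uniq // => x y; rewrite !mem_enum; exact: ginj.
move=> y /mapP [x]; rewrite mem_enum => xA ->.
by rewrite mem_iota add0n gb.
Qed.


Definition hf : rat := 2^-1.

Lemma hf_ge0 : 0 <= hf. Proof. by rewrite /hf invr_ge0. Qed.
Lemma hf_le1 : hf <= 1. Proof. by rewrite /hf invf_le1 // ler1n. Qed.

Lemma hfX2 l : (2 ^ l.+1)%:R * hf ^+ l = 2 :> rat.
Proof.
rewrite /hf exprVn natrX exprS -mulrA mulfV ?mulr1 //.
by rewrite expf_neq0.
Qed.

Lemma kraft n L (f : 'I_n -> seq bool) : injective f -> (n <= 2 ^ L)%N ->
  \sum_(x < n) hf ^+ size (f x) <= (2 * L + 1)%:R.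
Proof.
move=> finj nL.
rewrite (eq_bigr (fun x => (if (size (f x) < L)%N then hf ^+ size (f x) else 0)
   + (if (L <= size (f x))%N then hf ^+ size (f x) else 0))); last first.
  by move=> x _; case: ltnP => _ /=; rewrite ?addr0 ?add0r.
rewrite big_split /= natrD lerD //; last first.
  apply: (@le_trans _ _ (\sum_(x < n) hf ^+ L)).
    apply: ler_sum => x _; case: ifP => h; last by rewrite exprn_ge0 // hf_ge0.
    by apply: ler_wiXn2l; [exact: hf_ge0 | exact: hf_le1 | ].
  rewrite sumr_const card_ord /hf exprVn -[_ *+ n]mulr_natl ler_pdivrMr ?exprn_gt0 // mul1r.
  by rewrite -natrX ler_nat.
rewrite (eq_bigr (fun x => \sum_(l < L) (if size (f x) == l then hf ^+ l else 0))); last first.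
  move=> x _; case: ltnP => h.
    rewrite (bigD1 (Ordinal h)) //= eqxx big1 ?addr0 // => j /negbTE jn.
    case: eqP => // e; move: jn; suff -> : j = Ordinal h by rewrite eqxx.
    by apply: val_inj; rewrite /= e.
  by rewrite big1 // => j _; case: eqP => // e; move: (ltn_ord j); rewrite -e ltnNge h.
rewrite exchange_big /=.
rewrite (eq_bigr (fun l : 'I_L => (#|[pred x : 'I_n | size (f x) == l]|)%:R * hf ^+ l)); last first.
  move=> l _; rewrite -big_mkcond /= sumr_const mulr_natl.
  by [].
apply: (@le_trans _ _ (\sum_(l < L) 2%:R)); last first.
  by rewrite sumr_const card_ord natrM mulr_natr.
apply: ler_sum => l _.
rewrite -(hfX2 l) ler_wpM2r ?exprn_ge0 ?hf_ge0 // ler_nat.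
apply: (@card_code_bound _ _ (fun x => code (f x))).
  by move=> x y _ _ /code_inj /finj.
by move=> x; rewrite inE => /eqP <-; exact: code_lt.
Qed.


Lemma ffact_lower n a m : (m <= a)%N -> ((n - a) ^ m <= n ^_ m)%N.
Proof.
elim: m => [|m IH] h; first by rewrite expn0 ffactn0.
rewrite ffactnSr expnSr leq_mul ?IH ?(ltnW h) //.
by apply: leq_sub2l; exact: ltnW.
Qed.

Section Core.
Variables (n a L M K : nat) (srv : (nat -> bool) -> list bool)
  (cl : list bool -> nat -> list bool).
Hypotheses (an : (a <= n)%N) (nL : (n <= 2 ^ L)%N)
  (H1 : forall A, countA n A = a -> (size (srv A) <= M)%N)
  (H2 : forall A, countA n A = a -> forall x y, (x < n)%N -> (y < n)%N ->
          cl (srv A) x = cl (srv A) y -> x = y)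
  (H3 : forall A, countA n A = a -> (sumA n A (fun x => size (cl (srv A) x)) <= K)%N).

Let T := {ffun 'I_a -> 'I_n}.
Let At (t : T) : nat -> bool := fun x => [exists i, val (t i) == x].

Let sumAt (t : T) : injective t -> forall h : nat -> nat,
  sumA n (At t) h = (\sum_i h (t i))%N.
Proof.
move=> tinj h; rewrite sumA_big.
rewrite (eq_bigl (fun x : 'I_n => x \in [set t i | i : 'I_a])); last first.
  move=> x /=; apply/existsP/imsetP => [[i /eqP e]|[i _ ->]].
    by exists i => //; apply: val_inj.
  by exists i.
rewrite big_imset //= => i j _ _; exact: tinj.
Qed.

Let cntA (t : T) : injective t -> countA n (At t) = a.
Proof.
move=> tinj; rewrite /countA sumAt // sum1_card card_ord //.
Qed.

Let w (s : seq bool) (x : 'I_n) : rat := hf ^+ size (cl s x).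

Let step1 (t : T) : injective t ->
  1 <= 2 ^+ K * \prod_i w (srv (At t)) (t i).
Proof.
move=> tinj; rewrite /w prodrXr.
have HK := H3 _ (cntA _ tinj); rewrite sumAt // in HK.
apply: (@le_trans _ _ (2 ^+ K * hf ^+ K)).
  by rewrite /hf exprVn mulfV // expf_neq0.
rewrite ler_wpM2l ?exprn_ge0 //.
by apply: ler_wiXn2l; [exact: hf_ge0 | exact: hf_le1 | ].
Qed.

Let S := undup [seq srv (At t) | t <- enum [pred t : T | injectiveb t]].

Let memS s : s \in S -> exists t : T, injective t /\ s = srv (At t).
Proof.
rewrite mem_undup => /mapP [t]; rewrite mem_enum inE => /injectiveP ti ->.
by exists t.
Qed.

Let memS' (t : T) : injective t -> srv (At t) \in S.
Proof.
move=> ti; rewrite mem_undup; apply: map_f; rewrite mem_enum inE.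
by apply/injectiveP.
Qed.

Let sizeS : (size S <= 2 ^ M.+1)%N.
Proof.
rewrite -(size_map code) -(size_iota 0 (2 ^ M.+1)).
apply: uniq_leq_size; first by rewrite (map_inj_uniq code_inj) undup_uniq.
move=> y /mapP [s sS ->]; rewrite mem_iota add0n.
have [t [ti ->]] := memS _ sS.
apply: (leq_trans (code_lt _)); rewrite leq_exp2l //.
exact: H1 _ (cntA _ ti).
Qed.

Let kraftS s : s \in S -> \sum_(x < n) w s x <= (2 * L + 1)%:R.
Proof.
move=> /memS [t [ti ->]]; apply: kraft => // x y /(H2 _ (cntA _ ti)) e.
by apply: val_inj; apply: e.
Qed.

Lemma core_rat : ((n ^_ a)%:R : rat) <= 2 ^+ K * ((2 ^ M.+1)%:R * (2 * L + 1)%:R ^+ a).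
Proof.
have := card_inj_ffuns 'I_a 'I_n; rewrite !card_ord => <-.
rewrite -sum1_card natr_sum.
rewrite (eq_bigl (fun t : T => injectiveb t)); last by move=> t; rewrite inE.
apply: (@le_trans _ _ (\sum_(t : T | injectiveb t) 2 ^+ K * \prod_i w (srv (At t)) (t i))).
  apply: ler_sum => t /injectiveP ti; exact: step1.
rewrite -big_distrr /= ler_wpM2l ?exprn_ge0 //.
apply: (@le_trans _ _ (\sum_(t : T | injectiveb t) \sum_(s <- S) \prod_i w s (t i))).
  apply: ler_sum => t /injectiveP ti.
  rewrite (bigD1_seq _ (memS' _ ti) (undup_uniq _)) /= lerDl.
  by apply: sumr_ge0 => s _; apply: prodr_ge0 => i _; rewrite exprn_ge0 // hf_ge0.
rewrite exchange_big /=.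
apply: (@le_trans _ _ (\sum_(s <- S) (2 * L + 1)%:R ^+ a)).
  rewrite big_seq_cond [X in _ <= X]big_seq_cond.
  apply: ler_sum => s; rewrite andbT => sS.
  apply: (@le_trans _ _ (\sum_(t : T) \prod_i w s (t i))).
    rewrite [X in _ <= X](bigID (fun t : T => injectiveb t)) /= lerDl.
    by apply: sumr_ge0 => t _; apply: prodr_ge0 => i _; rewrite exprn_ge0 // hf_ge0.
  rewrite -(bigA_distr_bigA (fun (i : 'I_a) (x : 'I_n) => w s x)) /=.
  rewrite prodr_const card_ord lerXn2r ?kraftS // qualifE /=.
    by apply: sumr_ge0 => x _; rewrite exprn_ge0 // hf_ge0.
  by rewrite ler0n.
rewrite big_const_seq count_predT.
have -> : forall (c : rat) k, iter k (+%R c) 0 = c *+ k.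
  by move=> c; elim=> // k IH; rewrite iterS IH mulrS.
rewrite -[_ *+ size S]mulr_natl ler_wpM2r ?exprn_ge0 ?ler0n // ler_nat.
exact: sizeS.
Qed.

Lemma core_nat : ((n - a) ^ a <= 2 ^ (K + M.+1) * (2 * L + 1) ^ a)%N.
Proof.
apply: (leq_trans (@ffact_lower n a a (leqnn a))).
have := core_rat; rewrite -natrX mulrA -natrM -natrX -natrM ler_nat.
by rewrite expnD.
Qed.

End Core.

Lemma pow_expn m e : Nat.pow m e = expn m e.
Proof. by elim: e => // e IH; rewrite expnS /= IH. Qed.

Lemma size_len (T : Type) (l : list T) : size l = length l.
Proof. by elim: l => //= x l ->. Qed.

Lemma core_std (n a L M K : nat) (srv : (nat -> bool) -> list bool)
  (cl : list bool -> nat -> list bool) :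
  (a <= n)%coq_nat -> (n <= Nat.pow 2 L)%coq_nat ->
  (forall A, countA n A = a -> (length (srv A) <= M)%coq_nat) ->
  (forall A, countA n A = a -> forall x y, (x < n)%coq_nat -> (y < n)%coq_nat ->
          cl (srv A) x = cl (srv A) y -> x = y) ->
  (forall A, countA n A = a ->
      (sumA n A (fun x => length (cl (srv A) x)) <= K)%coq_nat) ->
  (Nat.pow (Nat.sub n a) a <= Nat.mul (Nat.pow 2 (Nat.add K (S M))) (Nat.pow (Nat.add (Nat.mul 2 L) 1) a))%coq_nat.
Proof.
move=> /ssrnat.leP an; rewrite pow_expn => /ssrnat.leP nL H1 H2 H3.
apply/ssrnat.leP; rewrite !pow_expn.
have H1' : forall A, countA n A = a -> (size (srv A) <= M)%N.
  by move=> A HA; rewrite size_len; apply/ssrnat.leP; apply: H1.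
have H2' : forall A, countA n A = a -> forall x y, (x < n)%N -> (y < n)%N ->
          cl (srv A) x = cl (srv A) y -> x = y.
  by move=> A HA x y /ssrnat.ltP hx /ssrnat.ltP hy; apply: H2.
have H3' : forall A, countA n A = a -> (sumA n A (fun x => size (cl (srv A) x)) <= K)%N.
  move=> A HA; apply/ssrnat.leP.
  have -> : (fun x => size (cl (srv A) x)) = (fun x => length (cl (srv A) x)).
    by apply: functional_extensionality_dep => x; rewrite size_len.
  exact: H3.
exact: (@core_nat n a L M K srv cl nL H1' H2' H3').
Qed.

End MC.

Lemma sumn_R_two n (A : nat -> bool) pv qv (G : R -> R) :
  sumn_R n (fun x => G (if A x then pv else qv)) =
  INR (countA n A) * G pv + (INR n - INR (countA n A)) * G qv.
Proof.
induction n as [|n IH]; cbn [sumn_R].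
- unfold countA; simpl; ring.
- rewrite IH, S_INR. unfold countA; cbn [sumA]. fold (countA n A).
  destruct (A n); rewrite plus_INR; cbn [INR]; ring.
Qed.

Lemma sumn_R_ge n (A : nat -> bool) pv qv (h : nat -> nat) : 0 <= pv -> 0 <= qv ->
  pv * INR (sumA n A h) <= sumn_R n (fun x => (if A x then pv else qv) * INR (h x)).
Proof.
intros Hp Hq; induction n as [|n IH]; simpl.
- lra.
- rewrite plus_INR. pose proof (pos_INR (h n)).
  destruct (A n); simpl; nra.
Qed.

Lemma ceil_nat x : 0 <= x -> exists K : nat, x <= INR K <= x + 1.
Proof.
intros Hx. destruct (archimed x) as [H1 H2].
assert (Hz : (0 <= up x)%Z). { apply le_IZR. lra. }
exists (Z.to_nat (up x)). rewrite INR_IZR_INZ, Z2Nat.id by exact Hz. lra.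
Qed.

Lemma ln_le_sub1 y : 0 < y -> ln y <= y - 1.
Proof. intros Hy. pose proof (exp_ineq1_le (ln y)). rewrite exp_ln in H by exact Hy. lra. Qed.

Lemma ln_mono x y : 0 < x -> x <= y -> ln x <= ln y.
Proof.
intros Hx Hxy. destruct (Rle_lt_or_eq_dec x y Hxy) as [H|H].
- left; apply ln_increasing; auto.
- subst; lra.
Qed.

Lemma exp_mono x y : x <= y -> exp x <= exp y.
Proof.
intros H. destruct (Rle_lt_or_eq_dec x y H) as [H'|H'].
- left; apply exp_increasing; auto.
- subst; lra.
Qed.

Theorem theorem2 (k : nat) (eps : R) :
  (1 <= k)%nat -> 0 < eps ->
  ~ exists p : protocol,
      correct p /\
      (exists (c : R) (N : nat), forall n P, (N <= n)%nat -> is_distr n P ->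
          INR (length (server p n P)) <= c * Rpower (INR n) (1 / INR k - eps)) /\
      (exists g : nat -> R, little_o_log g /\
          forall n P, is_distr n P ->
            client_expected_bits p n P <= INR k * entropy n P + g n).
Proof.
intros Hk Heps [p [Hcorr [[c [N Hsrv]] [g [Hg Hcl]]]]].
destruct (INR_unbounded (/ eps)) as [r Hr].
assert (Hr1 : 1 <= INR r * eps).
{ assert (/ eps * eps = 1) by (field; lra). nra. }
assert (Hrn : (1 <= r)%nat).
{ destruct r; [simpl in Hr; pose proof (Rinv_0_lt_compat eps Heps); lra | lia]. }
assert (HrR : 1 <= INR r) by (apply (le_INR 1); exact Hrn).
assert (HkR : 1 <= INR k) by (apply (le_INR 1); exact Hk).
set (kR := INR k) in *. set (rR := INR r) in *.
set (eta := / (8 * kR * rR)).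
assert (Heta0 : 0 < eta) by (unfold eta; apply Rinv_0_lt_compat; nra).
assert (Heta8 : eta * (8 * kR * rR) = 1) by (unfold eta; field; nra).
assert (Heta1 : eta <= / 8).
{ assert (8 <= 8 * kR * rR) by nra. unfold eta. apply Rinv_le_contravar; lra. }
set (d := / (8 * rR)).
assert (Hd0 : 0 < d) by (unfold d; apply Rinv_0_lt_compat; nra).
assert (Hd8 : d * (8 * rR) = 1) by (unfold d; field; nra).
destruct (Hg d Hd0) as [Nd HNd].
set (Cc := Rmax c 0).
assert (HCc : 0 <= Cc) by apply Rmax_r.
set (Q := 8 * kR + 15 + 2 * Cc + 8 * kR * rR).
destruct (INR_unbounded (8 + Q)) as [w0 Hw0].
set (w := (w0 + N + Nd + 1)%nat).
assert (Hww0 : INR w0 <= INR w) by (apply le_INR; unfold w; lia).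
assert (HwN : (N <= w)%nat) by (unfold w; lia).
assert (HwNd : (Nd <= w)%nat) by (unfold w; lia).
assert (Hw1 : (1 <= w)%nat) by (unfold w; lia).
set (v := (w * w)%nat).
set (E1 := (k * r * v)%nat).
set (E2 := ((r - 1) * v)%nat).
set (n := (2 ^ E1)%nat).
set (a := (2 ^ E2)%nat).
assert (HE12 : (E2 + 1 <= E1)%nat).
{ unfold E1, E2, v. nia. }
assert (HnE1 : (E1 < n)%nat) by (apply Nat.pow_gt_lin_r; lia).
assert (Hkr : (1 <= k * r)%nat) by nia.
assert (Hwv : (w <= v)%nat) by (unfold v; nia).
assert (HE1w : (w <= E1)%nat).
{ unfold E1. pose proof (Nat.mul_le_mono_r 1 (k * r) v Hkr). lia. }
assert (HNn : (N <= n)%nat) by lia.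
assert (HNdn : (Nd <= n)%nat) by lia.
assert (Hn : INR n = 2 ^ E1) by (unfold n; rewrite pow_INR; reflexivity).
assert (Ha : INR a = 2 ^ E2) by (unfold a; rewrite pow_INR; reflexivity).
assert (Ha1 : 1 <= INR a) by (rewrite Ha; apply pow_R1_Rle; lra).
assert (Han2 : 2 * INR a <= INR n).
{ rewrite Ha, Hn. replace (2 * 2 ^ E2) with (2 ^ (E2 + 1)) by (rewrite pow_add; simpl; ring).
  apply Rle_pow; [lra | exact HE12]. }
assert (Han : (a <= n)%nat) by (apply INR_le; lra).
set (Aa := INR a) in *. set (Nn := INR n) in *.
set (pA := (1 - eta) / Aa).
set (qA := eta / (Nn - Aa)).
assert (HpA : 0 < pA) by (unfold pA; apply Rdiv_lt_0_compat; lra).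
assert (HqA : 0 < qA) by (unfold qA; apply Rdiv_lt_0_compat; lra).
set (P := fun (A : nat -> bool) (x : nat) => if A x then pA else qA).
assert (Hdistr : forall A, countA n A = a -> is_distr n (P A)).
{ intros A HA. split.
  - intros x _. unfold P. destruct (A x); lra.
  - change (sumn_R n (fun x => (fun y => y) (if A x then pA else qA)) = 1).
    rewrite sumn_R_two, HA. fold Aa Nn. unfold pA, qA. field. lra. }
set (Hval := - ((1 - eta) * log2 pA + eta * log2 qA)).
assert (Hent : forall A, countA n A = a -> entropy n (P A) = Hval).
{ intros A HA. unfold entropy.
  change (- sumn_R n (fun x => (fun y => if Req_EM_T y 0 then 0 else y * log2 y)
             (if A x then pA else qA)) = Hval).
  rewrite sumn_R_two, HA. fold Aa Nn.
  destruct (Req_EM_T pA 0); [lra|]. destruct (Req_EM_T qA 0); [lra|].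
  assert (E1' : Aa * pA = 1 - eta) by (unfold pA; field; lra).
  assert (E2' : (Nn - Aa) * qA = eta) by (unfold qA; field; lra).
  unfold Hval.
  replace (Aa * (pA * log2 pA) + (Nn - Aa) * (qA * log2 qA)) with
    ((Aa * pA) * log2 pA + ((Nn - Aa) * qA) * log2 qA) by ring.
  rewrite E1', E2'. reflexivity. }
set (cl := client p n).
set (srv := fun A => server p n (P A)).
set (len := fun A x => length (cl (srv A) x)).
assert (Hexp : forall A, countA n A = a -> pA * INR (sumA n A (len A)) <= kR * Hval + g n).
{ intros A HA. rewrite <- (Hent A HA).
  eapply Rle_trans; [| apply (Hcl n (P A) (Hdistr A HA))].
  unfold client_expected_bits.
  apply (sumn_R_ge n A pA qA (len A)); lra. }
set (Lam := (kR * Hval + g n) / pA).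
destruct (ceil_nat (Rmax Lam 0) (Rmax_r _ _)) as [K [HK1 HK2]].
assert (HCa : 0 <= Cc * Aa) by nra.
destruct (ceil_nat (Cc * Aa) HCa) as [M [HM1 HM2]].
assert (HE1R : INR E1 = kR * rR * INR v) by (unfold E1; rewrite !mult_INR; reflexivity).
assert (HE2R : INR E2 = (rR - 1) * INR v).
{ unfold E2; rewrite mult_INR, minus_INR by exact Hrn. reflexivity. }
assert (Hv1 : 1 <= INR v) by (apply (le_INR 1); unfold v; nia).
assert (Hl2 : / 2 < ln 2) by exact ln_lt_2.
assert (Hl2' : ln 2 <= 1) by (pose proof (ln_le_sub1 2); lra).
assert (HlnN : ln Nn = INR E1 * ln 2) by (rewrite Hn, ln_pow by lra; reflexivity).
assert (HlnA : ln Aa = INR E2 * ln 2) by (rewrite Ha, ln_pow by lra; reflexivity).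
assert (Hrp : Rpower Nn (1 / kR - eps) <= Aa).
{ unfold Rpower. rewrite HlnN. rewrite <- (exp_ln Aa) by lra. rewrite HlnA.
  apply exp_mono. rewrite HE1R, HE2R.
  assert ((1 / kR - eps) * (kR * rR * INR v) = rR * INR v - eps * kR * rR * INR v)
    by (field; lra).
  replace ((1 / kR - eps) * (kR * rR * INR v * ln 2)) with
    ((rR * INR v - eps * kR * rR * INR v) * ln 2) by (field; lra).
  apply Rmult_le_compat_r; [lra|].
  assert (eps * kR * rR >= 1) by nra. nra. }
assert (HcoreH1 : forall A, countA n A = a -> (length (srv A) <= M)%nat).
{ intros A HA. apply INR_le. eapply Rle_trans; [apply (Hsrv n (P A) HNn (Hdistr A HA))|].
  fold Nn kR. eapply Rle_trans; [|exact HM1].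
  assert (0 < Rpower Nn (1 / kR - eps)) by (unfold Rpower; apply exp_pos).
  destruct (Rle_lt_dec 0 c).
  - unfold Cc; rewrite Rmax_left by lra. nra.
  - assert (c * Rpower Nn (1 / kR - eps) <= 0) by nra. lra. }
assert (HcoreH2 : forall A, countA n A = a -> forall x y, (x < n)%nat -> (y < n)%nat ->
          cl (srv A) x = cl (srv A) y -> x = y).
{ intros A HA x y hx hy e.
  assert (Px : 0 < P A x) by (unfold P; destruct (A x); lra).
  assert (Py : 0 < P A y) by (unfold P; destruct (A y); lra).
  rewrite <- (Hcorr n (P A) (Hdistr A HA) x hx Px).
  rewrite <- (Hcorr n (P A) (Hdistr A HA) y hy Py).
  unfold cl, srv in e. rewrite e. reflexivity. }
assert (HcoreH3 : forall A, countA n A = a ->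
      (sumA n A (fun x => length (cl (srv A) x)) <= K)%nat).
{ intros A HA. apply INR_le. pose proof (Hexp A HA).
  assert (INR (sumA n A (len A)) <= Lam).
  { unfold Lam. apply (Rmult_le_reg_l pA); [exact HpA|].
    replace (pA * ((kR * Hval + g n) / pA)) with (kR * Hval + g n) by (field; lra).
    exact H. }
  pose proof (Rmax_l Lam 0). unfold len in H0. lra. }
pose proof (MC.core_std n a E1 M K srv cl Han (le_n _) HcoreH1 HcoreH2 HcoreH3) as Hcore.
apply le_INR in Hcore.
assert (HI2 : INR 2 = 2) by (simpl; ring).
rewrite mult_INR, !pow_INR, minus_INR in Hcore by exact Han.
replace (INR (2 * E1 + 1)) with (2 * INR E1 + 1) in Hcore
  by (rewrite plus_INR, mult_INR, HI2; simpl; ring).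
rewrite HI2 in Hcore. fold Aa Nn in Hcore.
replace (2 ^ (K + S M)) with (2 ^ K * 2 ^ (S M)) in Hcore by (rewrite pow_add; ring).
set (W := INR w) in *.
assert (HvW : INR v = W * W) by (unfold v, W; rewrite mult_INR; reflexivity).
assert (HW1 : 1 <= W) by (unfold W; apply (le_INR 1); exact Hw1).
set (X2 := 2 * INR E1 + 1) in *.
assert (HX2 : 0 < X2) by (unfold X2; pose proof (pos_INR E1); lra).
assert (HNA : 0 < Nn - Aa) by lra.
assert (Hmain : Aa * ln (Nn - Aa) <= (INR K + (INR M + 1)) * ln 2 + Aa * ln X2).
{ apply ln_mono in Hcore; [| apply pow_lt; exact HNA].
  rewrite !ln_mult in Hcore by (try apply Rmult_lt_0_compat; apply pow_lt; lra).
  rewrite (ln_mult (2 ^ K) (2 ^ S M)) in Hcore by (apply pow_lt; lra).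
  rewrite !ln_pow, S_INR in Hcore by lra. fold Aa in Hcore. lra. }
assert (Hlow : (INR E1 - 1) * ln 2 <= ln (Nn - Aa)).
{ assert (ln (Nn * / 2) = INR E1 * ln 2 - ln 2).
  { rewrite ln_mult, ln_Rinv, HlnN by lra. ring. }
  replace ((INR E1 - 1) * ln 2) with (INR E1 * ln 2 - ln 2) by ring.
  rewrite <- H. apply ln_mono; lra. }
assert (HlnNA : ln (Nn - Aa) <= INR E1 * ln 2) by (rewrite <- HlnN; apply ln_mono; lra).
assert (Hlp : ln pA = ln (1 - eta) - INR E2 * ln 2).
{ unfold pA, Rdiv. rewrite ln_mult, ln_Rinv, HlnA by first [lra | apply Rinv_0_lt_compat; lra]. ring. }
assert (Hlq : ln qA = ln eta - ln (Nn - Aa)).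
{ unfold qA, Rdiv. rewrite ln_mult, ln_Rinv by first [lra | apply Rinv_0_lt_compat; lra]. ring. }
assert (Hl1 : - ln (1 - eta) <= eta / (1 - eta)).
{ replace (- ln (1 - eta)) with (ln (/ (1 - eta))) by (rewrite ln_Rinv by lra; ring).
  eapply Rle_trans; [apply ln_le_sub1; apply Rinv_0_lt_compat; lra|].
  right. field. lra. }
assert (Hl1' : - (1 - eta) * ln (1 - eta) <= eta).
{ replace (- (1 - eta) * ln (1 - eta)) with ((1 - eta) * (- ln (1 - eta))) by ring.
  eapply Rle_trans; [apply Rmult_le_compat_l; [lra | exact Hl1] | right; field; lra]. }
assert (Hl2e : - eta * ln eta <= 1).
{ unfold eta at 2. rewrite ln_Rinv by nra.
  pose proof (ln_le_sub1 (8 * kR * rR)). nra. }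
assert (HvalB : Hval * ln 2 <= eta + 1 + INR E2 * ln 2 + eta * INR E1 * ln 2).
{ assert (HH : Hval * ln 2 = - (1 - eta) * ln pA - eta * ln qA).
  { unfold Hval, log2. field. lra. }
  rewrite HH, Hlp, Hlq. pose proof (pos_INR E2).
  assert (0 <= INR E2 * ln 2) by nra.
  assert (eta * ln (Nn - Aa) <= eta * (INR E1 * ln 2)) by (apply Rmult_le_compat_l; lra).
  assert (0 <= eta * (INR E2 * ln 2)) by nra.
  nra. }
assert (HvalB' : Hval <= 4 + INR E2 + eta * INR E1).
{ apply (Rmult_le_reg_r (ln 2)); [lra|].
  pose proof (pos_INR E1). nra. }
assert (Hgn : g n <= d * INR E1).
{ pose proof (HNd n HNdn). fold Nn in H. rewrite HlnN in H.
  pose proof (Rle_abs (g n)). pose proof (pos_INR E1).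
  assert (HdE : 0 <= d * INR E1) by nra.
  assert (d * (INR E1 * ln 2) <= d * INR E1 * 1) by (rewrite <- Rmult_assoc; apply Rmult_le_compat_l; lra).
  lra. }
assert (HU : kR * Hval + g n <= kR * rR * INR v - 3 / 4 * kR * INR v + 4 * kR).
{ assert (kR * (eta * INR E1) = kR * INR v / 8).
  { rewrite HE1R. replace eta with (/ (8 * kR * rR)) by reflexivity. field. nra. }
  assert (d * INR E1 = kR * INR v / 8).
  { rewrite HE1R. unfold d. field. nra. }
  rewrite HE2R in HvalB'. nra. }
set (U := kR * rR * INR v - 3 / 4 * kR * INR v + 4 * kR) in *.
set (B := kR * rR * INR v - kR * INR v / 2 + 4 * kR + 1).
assert (HkRv : kR * INR v <= kR * rR * INR v).
{ assert (0 <= kR * INR v * (rR - 1)) by (apply Rmult_le_pos; nra). nra. }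
assert (HkRv0 : 0 <= kR * INR v) by nra.
assert (HU0 : 0 <= U) by (unfold U; nra).
assert (HLam1 : Lam <= Aa * (U / (1 - eta))).
{ unfold Lam, pA.
  replace ((kR * Hval + g n) / ((1 - eta) / Aa)) with ((kR * Hval + g n) * (Aa / (1 - eta)))
    by (field; lra).
  replace (Aa * (U / (1 - eta))) with (U * (Aa / (1 - eta))) by (field; lra).
  apply Rmult_le_compat_r; [left; apply Rdiv_lt_0_compat; lra | exact HU]. }
assert (HUB : U / (1 - eta) <= B).
{ assert (Hek : eta * kR * rR = / 8) by nra.
  assert (Hek2 : eta * kR * 8 <= 1).
  { assert (eta * kR * 8 * rR = 1) by nra.
    assert (0 <= eta * kR * 8) by nra. nra. }
  assert (H2U : 2 * eta * U <= INR v / 4 + 1).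
  { unfold U. assert (0 <= eta * kR * INR v) by nra.
    replace (2 * eta * (kR * rR * INR v - 3 / 4 * kR * INR v + 4 * kR)) with
      (2 * (eta * kR * rR) * INR v - 3 / 2 * (eta * kR * INR v) + (eta * kR * 8)) by field.
    rewrite Hek. lra. }
  assert (HvkR : INR v <= kR * INR v) by nra.
  apply (Rmult_le_reg_r (1 - eta)); [lra|].
  replace (U / (1 - eta) * (1 - eta)) with U by (field; lra).
  assert (U * (1 + 2 * eta) <= B) by (unfold B, U in *; lra).
  assert (U <= U * (1 + 2 * eta) * (1 - eta)).
  { assert (0 <= U * eta * (1 - 2 * eta)) by (apply Rmult_le_pos; [apply Rmult_le_pos|]; lra).
    nra. }
  assert (U * (1 + 2 * eta) * (1 - eta) <= B * (1 - eta)) by (apply Rmult_le_compat_r; lra).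
  lra. }
assert (HKB : INR K <= Aa * B + 1).
{ assert (Rmax Lam 0 <= Aa * B).
  { apply Rmax_lub; [| apply Rmult_le_pos; [lra | unfold B; nra]].
    eapply Rle_trans; [exact HLam1|]. apply Rmult_le_compat_l; lra. }
  lra. }
assert (Hfin1 : (INR E1 - 1 - B - Cc) * ln 2 <= 3 * ln 2 + ln X2).
{ assert (HA : Aa * ((INR E1 - 1) * ln 2) <= (Aa * B + 1 + (Cc * Aa + 1) + 1) * ln 2 + Aa * ln X2).
  { eapply Rle_trans; [apply Rmult_le_compat_l; [lra | exact Hlow]|].
    eapply Rle_trans; [exact Hmain|].
    apply Rplus_le_compat_r. apply Rmult_le_compat_r; lra. }
  assert (HB2 : Aa * ((INR E1 - 1 - B - Cc) * ln 2 - 3 * ln 2 - ln X2) <= 3 * ln 2 - 3 * Aa * ln 2)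
    by nra.
  assert (3 * ln 2 - 3 * Aa * ln 2 <= 0) by nra.
  assert (HB3 : (INR E1 - 1 - B - Cc) * ln 2 - 3 * ln 2 - ln X2 <= 0).
  { destruct (Rle_lt_dec ((INR E1 - 1 - B - Cc) * ln 2 - 3 * ln 2 - ln X2) 0); [assumption|].
    exfalso. assert (0 < Aa * ((INR E1 - 1 - B - Cc) * ln 2 - 3 * ln 2 - ln X2))
      by (apply Rmult_lt_0_compat; lra). lra. }
  lra. }
assert (HX2b : ln X2 <= 2 * kR * rR + 2 * W).
{ assert (HW0 : 0 < W) by lra.
  assert (X2 <= (2 * kR * rR + 1) * (W * W)).
  { unfold X2. rewrite HE1R, HvW. assert (1 <= W * W) by nra. nra. }
  eapply Rle_trans; [apply ln_mono; [lra | exact H]|].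
  rewrite !ln_mult by nra.
  pose proof (ln_le_sub1 (2 * kR * rR + 1)). pose proof (ln_le_sub1 W).
  assert (0 < 2 * kR * rR + 1) by nra. lra. }
assert (HTe : INR E1 - 1 - B - Cc = kR * (W * W) / 2 - 4 * kR - 2 - Cc).
{ unfold B. rewrite HE1R, HvW. field. }
rewrite HTe in Hfin1.
set (T := kR * (W * W) / 2 - 4 * kR - 5 - Cc).
assert (HT : T * ln 2 <= 2 * kR * rR + 2 * W).
{ unfold T. replace ((kR * (W * W) / 2 - 4 * kR - 5 - Cc) * ln 2) with
    ((kR * (W * W) / 2 - 4 * kR - 2 - Cc) * ln 2 - 3 * ln 2) by ring. lra. }
assert (HkRr0 : 0 <= kR * rR) by (apply Rmult_le_pos; lra).
assert (HQ0 : 0 <= Q) by (unfold Q; lra).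
assert (HW8 : 8 + Q < W) by lra.
assert (HWW : (8 + Q) * W <= W * W) by (apply Rmult_le_compat_r; lra).
assert (HkWW : 1 * (W * W) <= kR * (W * W)) by (apply Rmult_le_compat_r; [apply Rmult_le_pos|]; lra).
assert (HQW : Q * 1 <= Q * W) by (apply Rmult_le_compat_l; lra).
assert (HTlow : 4 * W + 2 + 4 * (kR * rR) <= T).
{ unfold T. unfold Q in HWW, HQW. lra. }
assert (HT2 : T * / 2 < T * ln 2) by (apply Rmult_lt_compat_l; lra).
lra.
Qed.
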